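(* Let $G$ be a group with finite generating set $Y$ and let $\mathscr S$ be a retractive family of subsets of $Y$ relative to $Y$. Suppose $\bigcup\mathscr S=Y$ and the elements of $\mathscr S$ are pairwise incomparable under inclusion. Suppose (i) $[a,b]=1$ whenever $\{a,b\}\subseteq Y$ is transverse to $\mathscr S$, and (ii) $[a,\langle S\rangle^2]=1$ for every $S\in\mathscr S$ and every $a\in Y-S$, where $\langle S\rangle^2$ is the commutator subgroup of the subgroup $\langle S\rangle\cong G_S$. Then $\rho_{\mathscr S}=\prod_{S\in\mathscr S}\rho_S\colon G\to\prod_{S\in\mathscr S}G_S$ is injective.
   Context: Conventions: $[x,y]=x^{-1}y^{-1}xy$. For $S\subseteq Y$, $G_S$ is the quotient of $G$ by the normal closure of $Y-S$, with projection $\rho_S$. $S$ is retractive if $\rho_S$ restricts to an injection on $\langle S\rangle$ (so $\langle S\rangle$ is identified with $G_S$); a retractive family is a family of retractive subsets all of whose intersections are retractive. A subset $T\subseteq Y$ is transverse to $\mathscr S$ if $T\not\subseteq S$ for every $S\in\mathscr S$. *)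

(* Defs.v *)
From mathcomp Require Import all_boot.
Set Implicit Arguments. Unset Strict Implicit. Unset Printing Implicit Defensive.

Record group := Group {
  gcar :> Type;
  gmul : gcar -> gcar -> gcar;
  gone : gcar;
  ginv : gcar -> gcar;
  gmulA : forall x y z, gmul x (gmul y z) = gmul (gmul x y) z;
  gmul1 : forall x, gmul gone x = x;
  gmulr1 : forall x, gmul x gone = x;
  gmulV : forall x, gmul (ginv x) x = gone;
  gmulrV : forall x, gmul x (ginv x) = gone
}.

Section Defs.
Variable G : group.

Definition comm (x y : G) : G :=
  gmul (gmul (gmul (ginv x) (ginv y)) x) y.

Inductive gen (A : G -> Prop) : G -> Prop :=
  | gen_in x : A x -> gen A x
  | gen_one : gen A (gone G)
  | gen_inv x : gen A x -> gen A (ginv x)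
  | gen_mul x z : gen A x -> gen A z -> gen A (gmul x z).

Definition nclosure (A : G -> Prop) : G -> Prop :=
  gen (fun x => exists a g, A a /\ x = gmul (gmul (ginv g) a) g).

Definition derived (H : G -> Prop) : G -> Prop :=
  gen (fun x => exists u v, H u /\ H v /\ x = comm u v).

Variables (I : finType) (y : I -> G).

Definition genS (S : {set I}) : G -> Prop := gen (fun x => exists2 i, i \in S & x = y i).

(* kernel of rho_S : G -> G_S, the normal closure of y(Y - S) *)
Definition kerS (S : {set I}) : G -> Prop :=
  nclosure (fun x => exists2 i, i \notin S & x = y i).

(* rho_S g = rho_S h  <->  g^-1 h in ker rho_S *)
Definition rho_eq (S : {set I}) (g h : G) : Prop := kerS S (gmul (ginv g) h).

Definition retractive (S : {set I}) : Prop :=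
  forall g h, genS S g -> genS S h -> rho_eq S g h -> g = h.

Definition retractive_family (F : {set {set I}}) : Prop :=
  forall F' : {set {set I}}, F' \subset F -> retractive (\bigcap_(S in F') S).

Definition transverse (F : {set {set I}}) (T : {set I}) : Prop :=
  forall S, S \in F -> ~~ (T \subset S).

Definition rho_family_injective (F : {set {set I}}) : Prop :=
  forall g h : G, (forall S, S \in F -> rho_eq S g h) -> g = h.

End Defs.

(* Main.v *)
Require Import Defs.
From mathcomp Require Import all_boot.
Set Implicit Arguments. Unset Strict Implicit. Unset Printing Implicit Defensive.

Section GL.
Variable G : group.
Local Notation "x ** y" := (gmul x y) (at level 40, left associativity).
Local Notation inv := (@ginv G).
Local Notation one := (gone G).

Lemma mulK (w x : G) : w ** x ** inv x = w.
Proof. by rewrite -gmulA gmulrV gmulr1. Qed.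
Lemma mulVK (w x : G) : w ** inv x ** x = w.
Proof. by rewrite -gmulA gmulV gmulr1. Qed.
Lemma mul_eq1 (x z : G) : x ** z = one -> x = inv z.
Proof. by move=> h; rewrite -(mulK x z) h gmul1. Qed.
Lemma invK (x : G) : inv (inv x) = x.
Proof. by rewrite -(mul_eq1 (gmulrV x)). Qed.
Lemma inv_mul (x z : G) : inv (x ** z) = inv z ** inv x.
Proof. apply/esym/mul_eq1. by rewrite gmulA mulVK gmulV. Qed.
Lemma inv1 : inv one = one.
Proof. by rewrite -(mul_eq1 (gmul1 one)). Qed.

Definition conj (g x : G) := gmul (gmul (ginv g) x) g.

Ltac gsimpl := rewrite /conj /comm; repeat progress rewrite ?inv_mul ?invK ?inv1 ?gmulA
   ?mulK ?mulVK ?gmulrV ?gmulV ?gmul1 ?gmulr1.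

Lemma conj_mul g h x : conj (g ** h) x = conj h (conj g x). Proof. by gsimpl. Qed.
Lemma conj1 x : conj one x = x. Proof. by gsimpl. Qed.
Lemma conjM g x z : conj g (x ** z) = conj g x ** conj g z. Proof. by gsimpl. Qed.
Lemma conjV g x : conj g (inv x) = inv (conj g x). Proof. by gsimpl. Qed.
Lemma conj_one g : conj g one = one. Proof. by gsimpl. Qed.
Lemma conj_comm g u v : conj g (comm u v) = comm (conj g u) (conj g v). Proof. by gsimpl. Qed.
Lemma conjK a x : conj (inv a) (conj a x) = x. Proof. by gsimpl. Qed.
Lemma comm_inv u v : comm u v = inv (comm v u). Proof. by gsimpl. Qed.
Lemma commM_l u1 u2 v : comm (u1 ** u2) v = conj u2 (comm u1 v) ** comm u2 v. Proof. by gsimpl. Qed.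
Lemma commV_l u v : comm (inv u) v = conj (inv u) (inv (comm u v)). Proof. by gsimpl. Qed.
Lemma comm1_l v : comm one v = one. Proof. by gsimpl. Qed.
Lemma conj_as_comm g x : conj g x = x ** comm x g. Proof. by gsimpl. Qed.
Lemma decomp_inv a b : inv (a ** b) = inv a ** conj (inv a) (inv b). Proof. by gsimpl. Qed.
Lemma decomp_mul a b a' b' : a ** b ** (a' ** b') = a ** a' ** (conj a' b ** b'). Proof. by gsimpl. Qed.
Lemma eqv_mul_id x z x' z' : inv (x ** z) ** (x' ** z') = conj z (inv x ** x') ** (inv z ** z'). Proof. by gsimpl. Qed.
Lemma eqv_inv_id x x' : inv (inv x) ** inv x' = conj (inv x) (inv (inv x ** x')). Proof. by gsimpl. Qed.
Lemma eqv_trans_id x z w : inv x ** w = (inv x ** z) ** (inv z ** w). Proof. by gsimpl. Qed.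
Lemma eqv_sym_id x z : inv z ** x = inv (inv x ** z). Proof. by gsimpl. Qed.

Lemma comm_conj_triv a x : comm a x = one -> conj a x = x /\ conj (inv a) x = x.
Proof.
move=> h.
have h1 : conj a (inv x) = inv x.
  by apply: mul_eq1; rewrite /conj; move: h; rewrite /comm.
have h2 : conj a x = x by rewrite -(invK (conj a x)) -conjV h1 invK.
by split=> //; rewrite -{1}h2 conjK.
Qed.
End GL.

Section Main.
Variables (G : group) (I : finType) (y : I -> G).
Local Notation "x ** y" := (gmul x y) (at level 40, left associativity).
Local Notation inv := (@ginv G).
Local Notation one := (gone G).

Definition closedP (P : G -> Prop) :=
  [/\ P one, (forall x, P x -> P (inv x)) & (forall x z, P x -> P z -> P (x ** z))].
Lemma gen_closed A : closedP (gen A).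
Proof. split; by constructor. Qed.

Lemma gen_sub (A P : G -> Prop) : closedP P -> (forall x, A x -> P x) ->
  forall x, gen A x -> P x.
Proof. case=> h1 hi hm hA x; elim=> //; auto. Qed.

Lemma gen_hom (A B : G -> Prop) (f : G -> G) :
  f one = one -> (forall x, f (inv x) = inv (f x)) -> (forall x z, f (x ** z) = f x ** f z) ->
  (forall x, A x -> gen B (f x)) -> forall x, gen A x -> gen B (f x).
Proof.
move=> h1 hi hm hA x; elim=> [u /hA //| |u _ IH|u z _ IHu _ IHz].
- by rewrite h1; constructor.
- by rewrite hi; constructor.
- by rewrite hm; constructor.
Qed.

Lemma gen_mono (A B : G -> Prop) : (forall x, A x -> B x) -> forall x, gen A x -> gen B x.
Proof. move=> h; apply: gen_sub; [exact: gen_closed| by move=> x /h; constructor]. Qed.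

Definition normal (P : G -> Prop) := forall g x, P x -> P (conj g x).

Lemma gen_normal A : (forall g x, A x -> gen A (conj g x)) -> normal (gen A).
Proof.
move=> h g; apply: gen_hom; [exact: conj_one|exact: conjV|exact: conjM|exact: h].
Qed.

Lemma normal_comm P : closedP P -> (forall x g, P x -> P (comm x g)) -> normal P.
Proof. move=> [_ _ hm] h g x Px; rewrite conj_as_comm; apply: hm => //; exact: h. Qed.

Lemma K_normal S : normal (kerS y S).
Proof.
apply: gen_normal => g x [a [h [Ha ->]]]; apply: gen_in; exists a, (h ** g); split=> //.
by change (conj g (conj h a) = conj (h ** g) a); rewrite conj_mul.
Qed.

Lemma K_gen (S : {set I}) i : i \notin S -> kerS y S (y i).
Proof. move=> hi; apply: gen_in; exists (y i), one; split; first by exists i. by rewrite -/(conj one (y i)) conj1. Qed.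

Definition eqv S x z := kerS y S (inv x ** z).

Lemma eqv_refl S x : eqv S x x.
Proof. rewrite /eqv gmulV; exact: gen_one. Qed.
Lemma eqv_sym S x z : eqv S x z -> eqv S z x.
Proof. rewrite /eqv (eqv_sym_id x z); exact: gen_inv. Qed.
Lemma eqv_trans S x z w : eqv S x z -> eqv S z w -> eqv S x w.
Proof. rewrite /eqv (eqv_trans_id x z w); exact: gen_mul. Qed.
Lemma eqv_mul S x z x' z' : eqv S x x' -> eqv S z z' -> eqv S (x ** z) (x' ** z').
Proof. rewrite /eqv (eqv_mul_id x z x' z') => h1 h2; apply: gen_mul => //; exact: K_normal. Qed.
Lemma eqv_inv S x x' : eqv S x x' -> eqv S (inv x) (inv x').
Proof. rewrite /eqv (eqv_inv_id x x') => h; apply: K_normal; exact: gen_inv. Qed.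
Lemma eqv_comm S u v u' v' : eqv S u u' -> eqv S v v' -> eqv S (comm u v) (comm u' v').
Proof.
move=> hu hv; rewrite /comm; apply: eqv_mul => //; apply: eqv_mul => //.
by apply: eqv_mul; apply: eqv_inv.
Qed.

Definition good S (P : G -> Prop) x := exists x', [/\ P x', genS y S x' & eqv S x' x].

Lemma good_mono S (P Q : G -> Prop) x : (forall z, P z -> Q z) -> good S P x -> good S Q x.
Proof. by move=> h [x' [? ? ?]]; exists x'; split=> //; apply: h. Qed.

Lemma good_gen S (A P : G -> Prop) : closedP P -> (forall x, A x -> good S P x) ->
  forall x, gen A x -> good S P x.
Proof.
case=> h1 hi hm hA x; elim=> [u /hA //| |u _ [u' [? ? ?]]|u z _ [u' [? ? ?]] _ [z' [? ? ?]]].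
- exists one; split=> //; [exact: gen_one | exact: eqv_refl].
- exists (inv u'); split; [exact: hi| exact: gen_inv| exact: eqv_inv].
- exists (u' ** z'); split; [exact: hm| exact: gen_mul| exact: eqv_mul].
Qed.

Lemma genS_good T S x : genS y T x -> good S (genS y T) x.
Proof.
apply: good_gen; first exact: gen_closed.
move=> _ [i hi ->]; case: (boolP (i \in S)) => his.
- exists (y i); split; [by apply: gen_in; exists i| by apply: gen_in; exists i| exact: eqv_refl].
- exists one; split; [exact: gen_one|exact: gen_one|].
  by rewrite /eqv inv1 gmul1; apply: K_gen.
Qed.

Lemma genS_comm T u v : genS y T u -> genS y T v -> genS y T (comm u v).
Proof. by move=> hu hv; rewrite /comm; repeat (apply: gen_mul || apply: gen_inv). Qed.

Lemma derived_good T S x : derived (genS y T) x -> good S (derived (genS y T)) x.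
Proof.
apply: good_gen; first exact: gen_closed.
move=> _ [u [v [hu [hv ->]]]].
case: (genS_good S hu) => u' [hu1 hu2 hu3]; case: (genS_good S hv) => v' [hv1 hv2 hv3].
exists (comm u' v'); split; [by apply: gen_in; exists u', v'| exact: genS_comm| exact: eqv_comm].
Qed.

Lemma derived_sub T x : derived (genS y T) x -> genS y T x.
Proof. apply: gen_sub; first exact: gen_closed. by move=> _ [u [v [hu [hv ->]]]]; apply: genS_comm. Qed.

Fixpoint Hf (A : {set I} -> G -> Prop) (W : G -> Prop) (l : seq {set I}) : G -> Prop :=
  match l with
  | [::] => W
  | T :: l' => gen (fun x => A T x \/ Hf A W l' x)
  end.

Lemma Hf_closed A W l : closedP W -> closedP (Hf A W l).
Proof. by case: l => [//|S l] _; apply: gen_closed. Qed.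

Lemma Hf_A A W l S x : S \in l -> A S x -> Hf A W l x.
Proof.
elim: l => [//|T l IH]; rewrite in_cons => /orP [/eqP <- hx|hl hx]; apply: gen_in; first by left.
by right; apply: IH.
Qed.

Lemma Hf_W A W l x : W x -> Hf A W l x.
Proof. elim: l => [//|T l IH] hx; apply: gen_in; right; exact: IH. Qed.

Lemma decomp (A B : G -> Prop) : closedP A -> closedP B -> normal B ->
  forall x, gen (fun x => A x \/ B x) x -> exists a b, [/\ A a, B b & x = a ** b].
Proof.
case=> a1 ai am [b1 bi bm] nB x; elim.
- move=> u [hu|hu]; [exists u, one | exists one, u]; split=> //; by rewrite ?gmulr1 ?gmul1.
- by exists one, one; split=> //; rewrite gmulr1.
- move=> u _ [a [b [ha hb ->]]]; exists (inv a), (conj (inv a) (inv b)); split; auto.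
  exact: decomp_inv.
- move=> u z _ [a [b [ha hb ->]]] _ [a' [b' [ha' hb' ->]]].
  exists (a ** a'), (conj a' b ** b'); split; auto. exact: decomp_mul.
Qed.


Lemma elim_step A W S l x :
  retractive y S -> closedP W -> closedP (A S) -> (forall a, A S a -> genS y S a) ->
  normal (Hf A W l) -> (forall b, Hf A W l b -> good S (Hf A W l) b) ->
  Hf A W (S :: l) x -> kerS y S x -> Hf A W l x.
Proof.
move=> hr hW hA hAS hn hg hx hK.
have [h1 hi hm] := @Hf_closed A W l hW.
have [a [b [ha hb ex]]] := decomp hA (@Hf_closed A W l hW) hn hx; subst x.
have [b' [hb1 hb2 hb3]] := hg _ hb.
have e1 : eqv S (a ** b') (a ** b) by apply: eqv_mul => //; apply: eqv_refl.
have e2 : eqv S (a ** b) one by rewrite /eqv gmulr1; exact: (gen_inv hK).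
have := hr (a ** b') one (gen_mul (hAS _ ha) hb2) (gen_one _) (eqv_trans e1 e2).
move/mul_eq1 => ea; apply: hm => //; rewrite ea; exact: hi.
Qed.

Lemma Hf_good (F : {set {set I}}) A W :
  closedP W ->
  (forall S T, S \in F -> T \in F -> forall x, A T x -> good S (A T) x) ->
  (forall S, S \in F -> forall x, W x -> good S W x) ->
  forall l, {subset l <= F} -> forall S, S \in F -> forall b, Hf A W l b -> good S (Hf A W l) b.
Proof.
move=> hW hgA hgW; elim=> [|T l IH] hl S hS b; first exact: hgW.
apply: good_gen; first exact: gen_closed.
move=> x [hx|hx].
- apply: good_mono (hgA _ _ hS _ x hx); first by move=> z hz; apply: gen_in; left.
  by apply: hl; rewrite in_cons eqxx.
- apply: good_mono (IH _ S hS x hx); first by move=> z hz; apply: gen_in; right.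
  by move=> z hz; apply: hl; rewrite in_cons hz orbT.
Qed.

Lemma elim_all (F : {set {set I}}) A W :
  closedP W -> (forall S, closedP (A S)) -> (forall S, S \in F -> retractive y S) ->
  (forall S, S \in F -> forall a, A S a -> genS y S a) ->
  (forall l, {subset l <= F} -> normal (Hf A W l)) ->
  (forall S T, S \in F -> T \in F -> forall x, A T x -> good S (A T) x) ->
  (forall S, S \in F -> forall x, W x -> good S W x) ->
  forall l, {subset l <= F} -> forall x, Hf A W l x -> (forall S, S \in F -> kerS y S x) -> W x.
Proof.
move=> hW hA hr hAS hn hgA hgW; elim=> [//|S l IH] hl x hx hK.
have hSF : S \in F by apply: hl; rewrite in_cons eqxx.
have hlF : {subset l <= F} by move=> z hz; apply: hl; rewrite in_cons hz orbT.
apply: IH => //; apply: (elim_step (hr _ hSF) hW (hA S) (hAS _ hSF) (hn _ hlF)) => //.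
- exact: (Hf_good hW hgA hgW hlF hSF).
- exact: hK.
Qed.

End Main.

Section Main3.
Variables (G : group) (I : finType) (y : I -> G).
Local Notation "x ** y" := (gmul x y) (at level 40, left associativity).
Local Notation inv := (@ginv G).
Local Notation one := (gone G).

Hypothesis gen_all : forall g : G, genS y [set: I] g.

Lemma normal_by_gens (P : G -> Prop) : closedP P ->
  (forall i x, P x -> P (conj (y i) x) /\ P (conj (inv (y i)) x)) -> normal P.
Proof.
move=> hP hg g.
suff : forall x, P x -> P (conj g x) /\ P (conj (inv g) x) by move=> h x /h [].
elim: (gen_all g) => [_ [i _ ->]| |u _ IH|u z _ IHu _ IHz] x hx.
- exact: hg.
- by rewrite inv1 conj1.
- by rewrite invK; case: (IH x hx).
- rewrite conj_mul inv_mul conj_mul; split.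
  + by apply: (proj1 (IHz _ _)); apply: (proj1 (IHu _ hx)).
  + by apply: (proj2 (IHu _ _)); apply: (proj2 (IHz _ hx)).
Qed.

Lemma comm_left (N B : G -> Prop) v : closedP N -> normal N ->
  (forall a, B a -> N (comm a v)) -> forall u, gen B u -> N (comm u v).
Proof.
case=> h1 hi hm hn hB u; elim=> [a /hB //| |u' _ IH|u1 u2 _ IH1 _ IH2].
- by rewrite comm1_l.
- by rewrite commV_l; apply: hn; apply: hi.
- by rewrite commM_l; apply: hm => //; apply: hn.
Qed.

Lemma comm_all (N : G -> Prop) : closedP N -> normal N ->
  (forall a b, N (comm (y a) (y b))) -> forall u v, N (comm u v).
Proof.
move=> hc hn hab u v; have [_ hi _] := hc.
apply: (comm_left hc hn _ (gen_all u)) => _ [i _ ->].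
rewrite comm_inv; apply: hi.
apply: (comm_left hc hn _ (gen_all v)) => _ [j _ ->]; exact: hab.
Qed.

Lemma M_normal (S : {set I}) :
  (forall a, a \notin S -> forall x, derived (genS y S) x -> comm (y a) x = one) ->
  normal (derived (genS y S)).
Proof.
move=> h2; apply: normal_by_gens; first exact: gen_closed.
move=> i x hx; case: (boolP (i \in S)) => hiS.
- have hc : forall c, genS y S c -> derived (genS y S) (conj c x).
    move=> c hcS; move: x hx; apply: gen_hom; [exact: conj_one|exact: conjV|exact: conjM|].
    move=> _ [u [v [hu [hv ->]]]]; rewrite conj_comm; apply: gen_in.
    have hcj : forall w, genS y S w -> genS y S (conj c w).
      by move=> w hw; rewrite /conj; apply: gen_mul => //; apply: gen_mul => //; apply: gen_inv.
    by exists (conj c u), (conj c v); split; [|split]; auto.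
  have hy : genS y S (y i) by apply: gen_in; exists i.
  by split; apply: hc => //; apply: gen_inv.
- by have [-> ->] := comm_conj_triv (h2 _ hiS _ hx).
Qed.

End Main3.

Theorem mainTheorem8 (G : group) (I : finType) (y : I -> G)
  (F : {set {set I}}) :
  injective y ->
  (forall g : G, genS y [set: I] g) ->
  retractive_family y F ->
  \bigcup_(S in F) S = [set: I] ->
  (forall S1 S2, S1 \in F -> S2 \in F -> S1 \subset S2 -> S1 = S2) ->
  (forall a b : I, transverse F [set a; b] -> comm (y a) (y b) = gone G) ->
  (forall S a, S \in F -> a \notin S ->
     forall x, derived (genS y S) x -> comm (y a) x = gone G) ->
  rho_family_injective y F.
Proof.
move=> _ gen_all hRF hU _ h1 h2 g h hrho.
suff e : gmul (ginv g) h = gone G.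
  by rewrite -[h]gmul1 -(gmulrV g) -gmulA e gmulr1.
have hret : forall S, S \in F -> retractive y S.
  by move=> S hS; have := hRF [set S]; rewrite sub1set big_set1; apply.
have hK : forall S, S \in F -> kerS y S (gmul (ginv g) h) by move=> S /hrho.
have hlF : {subset enum F <= F} by move=> S; rewrite mem_enum.
set x := gmul (ginv g) h in hK *.
have hD : derived (genS y [set: I]) x.
  apply: (@elim_all G I y F (fun S => genS y S) (derived (genS y [set: I]))
            (gen_closed _) (fun S => gen_closed _) hret) (hlF) _ _ hK => //.
  - move=> l _; apply: normal_comm; first exact: Hf_closed (gen_closed _).
    move=> u v _; apply: Hf_W; apply: gen_in; exists u, v; split; [exact: gen_all|split=> //].
  - by move=> S T _ _ z; apply: genS_good.
  - by move=> S _ z; apply: derived_good.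
  - apply: gen_sub (gen_all x); first exact: Hf_closed (gen_closed _).
    move=> _ [i _ ->].
    have : i \in \bigcup_(S in F) S by rewrite hU.
    case/bigcupP=> S hS hiS; apply: (@Hf_A _ _ _ _ _ S); first by rewrite mem_enum.
    by apply: gen_in; exists i.
pose W2 := gen (fun _ : G => False).
have hW2 : closedP W2 by exact: gen_closed.
have hn2 : forall l, {subset l <= F} -> normal (Hf (fun S => derived (genS y S)) W2 l).
  elim=> [|T l IH] hl.
  - by apply: gen_normal.
  - apply: gen_normal => k z [hz|hz]; apply: gen_in.
    + left; apply: (M_normal gen_all) => //.
      by move=> a ha; apply: h2 => //; apply: hl; rewrite in_cons eqxx.
    + right; apply: IH => //; by move=> S hS; apply: hl; rewrite in_cons hS orbT.
have : W2 x.
  apply: (@elim_all G I y F (fun S => derived (genS y S)) W2 hW2 (fun S => gen_closed _) hret)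
    (hlF) _ _ hK => //.
  - by move=> S _ z; apply: derived_sub.
  - by move=> S T _ _ z; apply: derived_good.
  - by move=> S _ z; apply: good_gen => //.
  - apply: gen_sub hD; first exact: Hf_closed.
    move=> _ [u [v [_ [_ ->]]]].
    apply: (comm_all gen_all (Hf_closed _ _ hW2) (hn2 _ hlF)) => a b.
    case E: [exists S, (S \in F) && ([set a; b] \subset S)].
    + case/existsP: E => S /andP [hS hsub].
      apply: (@Hf_A _ _ _ _ _ S); first by rewrite mem_enum.
      apply: gen_in; exists (y a), (y b); split; last split=> //.
      * by apply: gen_in; exists a => //; apply: (subsetP hsub); rewrite set21.
      * by apply: gen_in; exists b => //; apply: (subsetP hsub); rewrite set22.
    + rewrite h1; first by case: (Hf_closed (fun S => derived (genS y S)) (enum F) hW2).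
      move=> S hS; apply/negP => hsub; move/negbT/negP: E; apply.
      by apply/existsP; exists S; rewrite hS hsub.
by elim=> // [z _ -> | z w _ -> _ ->]; rewrite ?inv1 ?gmul1.
Qed.
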